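(* Let $q=3^m$ with $m\ge1$ and $f(x)=x^{q+2}$ on $\mathbb{F}_{q^2}$. Then $$\sum_{a\in\mathbb{F}_{q^2},\,b\in\mathbb{F}_{q^2}^*}\big(W_f(a,b)-1\big)^3=q^2(q^2-1)(q^3-3q^2+2).$$
   Context: The Walsh transform is $W_f(a,b)=\sum_{x\in\mathbb{F}_{q^2}}\xi_3^{\mathrm{Tr}_{\mathbb{F}_{q^2}/\mathbb{F}_3}(bf(x)-ax)}$ with $\xi_3=e^{2\pi i/3}$ and $\mathrm{Tr}_{\mathbb{F}_{q^2}/\mathbb{F}_3}$ the absolute trace. *)

(* Defs.v *)
From mathcomp Require Import all_boot all_order all_algebra all_field.
Set Implicit Arguments. Unset Strict Implicit. Unset Printing Implicit Defensive.
Import Order.TTheory GRing.Theory Num.Theory.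
Local Open Scope ring_scope.

Definition xi3 : algC := (-1 + 'i * sqrtC 3%:R) / 2%:R.

(* absolute trace F -> F_3 (values in the prime subfield of F),
   Tr(x) = sum_{i < n} x^(3^i) where #|F| = 3^n *)
Definition absTr (F : finFieldType) (x : F) : F :=
  \sum_(i < logn 3 #|F|) x ^+ (3 ^ i).

(* additive character y |-> xi3 ^ Tr(y); Tr(y) lies in F_3 = {0,1,2},
   identified with the k < 3 such that k%:R = Tr(y) in F *)
Definition chi3 (F : finFieldType) (y : F) : algC :=
  \sum_(k < 3 | (k%:R : F) == absTr y) xi3 ^+ k.

Definition walsh (F : finFieldType) (f : F -> F) (a b : F) : algC :=
  \sum_(x : F) chi3 (b * f x - a * x).

(* Main.v *)
Require Import Defs.
From mathcomp Require Import all_boot all_order all_algebra all_field.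
From mathcomp Require Import ring.
From mathcomp Require Import cyclic zify.
Import GRing.Theory Num.Theory.
Local Open Scope ring_scope.
Set Implicit Arguments. Unset Strict Implicit.

Lemma ch3_of (F : finFieldType) n : #|F| = (3 ^ n)%N -> 3 \in [pchar F].
Proof. by move=> hF; apply: (card_finPcharP hF). Qed.

Lemma logn_card (F : finFieldType) n : #|F| = (3 ^ n)%N -> logn 3 #|F| = n.
Proof. by move=> ->; rewrite pfactorK. Qed.


Lemma natr3_eq (F : finFieldType) (ch : 3 \in [pchar F]) (k j : nat) :
  (k < 3)%N -> (j < 3)%N -> ((k%:R : F) == j%:R) = (k == j).
Proof.
have h1 : (1%:R : F) != 0 by rewrite -(dvdn_pcharf ch).
have h2 : (2%:R : F) != 0 by rewrite -(dvdn_pcharf ch).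
have e12 : ((1%:R : F) == 2%:R) = false.
  by apply/negbTE; rewrite eq_sym -subr_eq0 -natrB //.
case: k => [|[|[|k]]] // _; case: j => [|[|[|j]]] // _;
  rewrite ?eqxx // ?(eq_sym 0) ?(negbTE h1) ?(negbTE h2) ?e12 // eq_sym e12 //.
Qed.

Lemma xi3_gen (i s : algC) : i ^+ 2 = -1 -> s ^+ 2 = 3%:R ->
  ((-1 + i * s) / 2%:R) ^+ 3 = 1.
Proof.
move=> hi hs.
have -> : ((-1 + i * s) / 2%:R) ^+ 3 = (-1 - 3%:R * (i^+2 * s^+2) + 3%:R * (i * s) + i^+2 * s^+2 * (i * s)) / 8%:R.
  by field.
by rewrite hi hs; field; rewrite ?pnatr_eq0.
Qed.

Lemma xi3_3 : xi3 ^+ 3 = 1.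
Proof. exact: xi3_gen (sqrCi _) (sqrtCK _). Qed.

Lemma xi3_neq1 : xi3 != 1.
Proof.
apply/eqP; rewrite /xi3.
have hi := sqrCi algC. have hs := sqrtCK (3%:R : algC).
move: (sqrtC _) hs => s hs.
move/(congr1 (fun z => z * 2%:R)); rewrite divfK ?pnatr_eq0 // mul1r.
move/(congr1 (fun z => (z + 1) ^+ 2)).
have -> : (-1 + 'i * s + 1) ^+ 2 = 'i ^+ 2 * s ^+ 2 by ring.
rewrite hi hs => /eqP; rewrite -subr_eq0.
have -> : -1 * 3%:R - (2%:R + 1) ^+ 2 = - (12%:R : algC) by ring.
by rewrite oppr_eq0 pnatr_eq0.
Qed.

Lemma frobD (F : finFieldType) (ch : 3 \in [pchar F]) (x y : F) i :
  (x + y) ^+ (3 ^ i) = x ^+ (3 ^ i) + y ^+ (3 ^ i).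
Proof.
apply: exprDn_pchar.
by rewrite (eq_pnat _ (pcharf_eq ch)) pnatX pnat_id.
Qed.

Lemma absTrD (F : finFieldType) (ch : 3 \in [pchar F]) (x y : F) :
  absTr (x + y) = absTr x + absTr y.
Proof. by rewrite /absTr -big_split; apply: eq_bigr => i _; apply: frobD. Qed.

Lemma absTr3 (F : finFieldType) n (hF : #|F| = (3 ^ n)%N) (hn : (0 < n)%N) (x : F) :
  absTr x ^+ 3 = absTr x.
Proof.
have ch := ch3_of hF.
rewrite /absTr (logn_card hF) -(Frobenius_autE ch) rmorph_sum /=.
under eq_bigr => i _ do rewrite Frobenius_autE -exprM -expnSr.
case: n hF hn => // k hF _.
rewrite big_ord_recr big_ord_recl /= -hF expf_card [RHS]addrC expn0 expr1.
by congr (_ + _); apply: eq_bigr => i _; rewrite /bump add1n.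
Qed.

Lemma F3_val (F : finFieldType) (ch : 3 \in [pchar F]) (z : F) :
  z ^+ 3 = z -> exists k, z = k%:R.
Proof.
move=> h.
have : z * (z - 1) * (z + 1) == 0.
  have e : z * (z - 1) * (z + 1) = z ^+ 3 - z by ring.
  by rewrite e h subrr.
rewrite !mulf_eq0 subr_eq0 addr_eq0 => /orP[/orP[]|] /eqP ->.
- by exists 0%N.
- by exists 1%N.
- exists 2%N; apply/eqP; rewrite eq_sym -subr_eq0 opprK.
  by rewrite natr1 (pcharf0 ch).
Qed.

Lemma absTr_val (F : finFieldType) n (hF : #|F| = (3 ^ n)%N) (hn : (0 < n)%N) (x : F) :
  exists k, absTr x = k%:R.
Proof. exact: F3_val (ch3_of hF) _ (absTr3 hF hn x). Qed.

Lemma chi3_val (F : finFieldType) (ch : 3 \in [pchar F]) (y : F) k :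
  absTr y = k%:R -> chi3 y = xi3 ^+ k.
Proof.
move=> h; rewrite /chi3 h -(GRing.natr_mod_pchar ch k).
have lt : (k %% 3 < 3)%N by rewrite ltn_mod.
rewrite (big_pred1 (Ordinal lt)) /=; first by rewrite expr_mod // xi3_3.
by move=> j /=; rewrite natr3_eq // ltn_mod.
Qed.

Lemma chi3D (F : finFieldType) n (hF : #|F| = (3 ^ n)%N) (hn : (0 < n)%N) (u v : F) :
  chi3 (u + v) = chi3 u * chi3 v.
Proof.
have ch := ch3_of hF.
have [k1 h1] := absTr_val hF hn u; have [k2 h2] := absTr_val hF hn v.
rewrite (chi3_val ch h1) (chi3_val ch h2) (@chi3_val _ ch _ (k1 + k2)) ?exprD //.
by rewrite absTrD // h1 h2 natrD.
Qed.

Lemma absTr0 (F : finFieldType) (ch : 3 \in [pchar F]) : absTr (0 : F) = 0.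
Proof. by apply/eqP; rewrite -[X in X == _](addrK (absTr (0:F))) -absTrD // addr0 subrr. Qed.

Lemma chi30 (F : finFieldType) (ch : 3 \in [pchar F]) : chi3 (0 : F) = 1.
Proof. by rewrite (@chi3_val _ ch _ 0) ?absTr0. Qed.

Lemma absTr_nz (F : finFieldType) n (hF : #|F| = (3 ^ n)%N) (hn : (0 < n)%N) :
  exists c : F, absTr c != 0.
Proof.
case: n hF hn => // k hF _.
apply/existsP; apply: contraT; rewrite negb_exists => /forallP /= h0.
pose p : {poly F} := \sum_(i < k.+1) 'X^(3 ^ i).
have pE x : p.[x] = absTr x.
  by rewrite /p horner_sum /absTr (logn_card hF); apply: eq_bigr => i _; rewrite hornerXn.
have pnz : p != 0.
  apply/eqP => /(congr1 (fun q : {poly F} => q`_1)).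
  rewrite coef0 /p coef_sum.
  rewrite big_ord_recl coefXn expn0 eqxx big1 ?addr0 => [|i _]; first by move/eqP; rewrite oner_eq0.
  by rewrite coefXn; case: eqP => // /esym /eqP; rewrite expnS muln_eq1.
have := max_poly_roots pnz _ (enum_uniq F).
rewrite -cardE hF.
have -> : all (root p) (enum F).
  by apply/allP => x _; rewrite /root pE; apply/negPn/h0.
move=> /(_ isT) /leq_trans /(_ (size_sum _ _ _)).
have hle : (\max_(i < k.+1) size ('X^(3 ^ i) : {poly F}) <= 3 ^ k.+1)%N.
  by apply/bigmax_leqP => i _; rewrite size_polyXn ltn_exp2l.
by rewrite ltnNge hle.
Qed.

Lemma xi3_neq1' k : (k %% 3 != 0)%N -> xi3 ^+ k != 1.
Proof.
rewrite -(expr_mod _ xi3_3).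
have lt : (k %% 3 < 3)%N by rewrite ltn_mod.
move: (k %% 3)%N lt => [|[|[|j]]] // _ _; first by rewrite expr1 xi3_neq1.
apply: contra xi3_neq1 => /eqP h2.
by rewrite -xi3_3 exprSr h2 mul1r.
Qed.

Lemma chi3_sum0 (F : finFieldType) n (hF : #|F| = (3 ^ n)%N) (hn : (0 < n)%N) :
  \sum_(a : F) chi3 a = 0.
Proof.
have ch := ch3_of hF.
have [c hc] := absTr_nz hF hn.
have [k hk] := absTr_val hF hn c.
have c1 : chi3 c != 1.
  rewrite (chi3_val ch hk) xi3_neq1' //.
  by move: hc; rewrite hk -(GRing.natr_mod_pchar ch k); apply: contra => /eqP ->.
have e : \sum_(a : F) chi3 a = chi3 c * \sum_(a : F) chi3 a.
  rewrite {1}(reindex_inj (addrI c)) mulr_sumr /=.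
  by apply: eq_bigr => a _; rewrite (chi3D hF hn).
apply/eqP; move: e => /eqP; rewrite -subr_eq0 -{1}(mul1r (\sum_a _)) -mulrBl mulf_eq0.
by rewrite subr_eq0 eq_sym (negbTE c1).
Qed.

Lemma chi3_orth (F : finFieldType) n (hF : #|F| = (3 ^ n)%N) (hn : (0 < n)%N) (x : F) :
  \sum_(a : F) chi3 (a * x) = if x == 0 then (#|F|%:R : algC) else 0.
Proof.
have ch := ch3_of hF.
case: eqP => [->|/eqP xnz].
  by under eq_bigr => a _ do rewrite mulr0 chi30 //; rewrite sumr_const.
transitivity (\sum_(a : F) chi3 a); last exact: chi3_sum0 hF hn.
by rewrite [RHS](reindex_inj (mulIf xnz)).
Qed.

Lemma unit_pow (F : finFieldType) (x : F) : x != 0 -> x ^+ #|F|.-1 = 1.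
Proof.
move=> xnz; apply: (mulfI xnz); rewrite -exprS prednK ?expf_card ?mulr1 //.
by apply/card_gt0P; exists 0.
Qed.

Lemma root_count (F : finFieldType) (d : nat) :
  (0 < d)%N -> (d %| #|F|.-1)%N -> #|[pred t : F | t ^+ d == 1]| = d.
Proof.
move=> d0 dd.
have N0 : (0 < #|F|.-1)%N.
  by rewrite -(cardC1 (0 : F)); apply/card_gt0P; exists 1; rewrite !inE oner_eq0.
pose rs := enum [pred x : F | x != 0].
have : has (#|F|.-1).-primitive_root rs.
  apply: has_prim_root => //; rewrite ?enum_uniq //.
    by apply/allP => x; rewrite mem_enum => /= xnz; apply/unity_rootP/unit_pow.
  by rewrite -cardE -(cardC1 (0 : F)).
case/hasP => z _ pz.
have pw := dvdn_prim_root pz dd.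
set w := z ^+ _ in pw.
rewrite -[RHS]card_ord -(card_imset _ (_ : injective (fun i : 'I_d => w ^+ i))); last first.
  move=> i j /eqP; rewrite (eq_prim_root_expr pw) !modn_small //.
  by move/eqP/val_inj.
apply: eq_card => t; rewrite !inE; apply/idP/imsetP.
  by move/eqP/(prim_rootP pw) => [i ->]; exists i.
by case=> i _ ->; rewrite -exprM mulnC exprM (prim_expr_order pw) expr1n.
Qed.

Lemma sum_bool_card (F : finType) (P : pred F) : \sum_(t : F) (P t : nat) = #|P|.
Proof. by rewrite -sum1_card [RHS]big_mkcond; apply: eq_bigr => t _; rewrite unfold_in; case: (P t). Qed.

Lemma countG (F : finFieldType) (q : nat) (hq : (1 < q)%N) (hF : #|F| = (q ^ 2)%N) :
  \sum_(x : F) \sum_(y : F) ((x == 0) || (y == 0) || (x ^+ q.-1 == y ^+ q.-1) : nat)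
  = (q ^ 3 + q ^ 2 - q)%N.
Proof.
rewrite (bigD1 0) //= eqxx.
rewrite (sum_bool_card (fun _ => true)) (_ : #|xpredT| = #|F|); last by apply: eq_card.
have q0 : (0 < q.-1)%N by rewrite -ltnS prednK ?(ltnW hq).
rewrite (eq_bigr (fun _ => q)) => [|x /= xnz]; last first.
  rewrite (negbTE xnz) /=.
  have xk : x ^+ q.-1 != 0 by rewrite expf_neq0.
  rewrite (eq_bigr (fun y : F => addn (y == 0)%R (y ^+ q.-1 == x ^+ q.-1)%R)) => [|y _]; last first.
    case: eqP => [->|] //=.
      rewrite (_ : (_ == _) = false) //; apply/negbTE; rewrite eq_sym; apply: contra xk => /eqP ->.
      by rewrite expf_eq0 q0 eqxx.
    by move=> _; rewrite eq_sym.
  rewrite big_split /= (sum_bool_card (pred1 0)) card1.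
  rewrite (reindex_inj (mulIf xnz)) /=.
  rewrite (eq_bigr (fun t => (t ^+ q.-1 == 1) : nat)) => [|t _]; last first.
    by rewrite exprMn -{2}(mul1r (x ^+ q.-1)) (inj_eq (mulIf xk)).
  rewrite (sum_bool_card (fun t : F => t ^+ q.-1 == 1)) root_count //.
    by move: q0 => /= _; lia.
  rewrite hF (_ : (q ^ 2).-1 = (q.-1 * q.+1)%N); first exact: dvdn_mulr.
  rewrite expnS expn1; nia.
rewrite sum_nat_const cardC1 hF !expnS expn0 !muln1; nia.
Qed.

Lemma Gfact (F : finFieldType) (ch : 3 \in [pchar F]) m (x y : F) :
  x ^+ (3 ^ m + 2) + y ^+ (3 ^ m + 2) - (x + y) ^+ (3 ^ m + 2)
  = x * y * (x - y) * (x ^+ (3 ^ m).-1 - y ^+ (3 ^ m).-1).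
Proof.
rewrite !exprD (frobD ch).
have hq : (3 ^ m = (3 ^ m).-1.+1)%N by rewrite prednK // expn_gt0.
rewrite [in LHS]hq !exprSr.
move: (x ^+ _) (y ^+ _) => u v.
transitivity (x * y * (x - y) * (u - v) - 3%:R * (x ^+ 2 * y * u + x * y ^+ 2 * v)); first by ring.
by rewrite (pcharf0 ch) mul0r subr0.
Qed.

Lemma G_eq0 (F : finFieldType) (ch : 3 \in [pchar F]) m (x y : F) :
  (x ^+ (3 ^ m + 2) + y ^+ (3 ^ m + 2) - (x + y) ^+ (3 ^ m + 2) == 0)
  = (x == 0) || (y == 0) || (x ^+ (3 ^ m).-1 == y ^+ (3 ^ m).-1).
Proof.
rewrite Gfact // !mulf_eq0 subr_eq0 subr_eq0.
by case: (x =P y) => [->|]; rewrite ?eqxx ?orbT ?orbF.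
Qed.

Lemma sum_chi_lin (F : finFieldType) n (hF : #|F| = (3 ^ n)%N) (hn : (0 < n)%N) (c s : F) :
  \sum_(a : F) chi3 (c - a * s) = chi3 c * (if s == 0 then (#|F|%:R : algC) else 0).
Proof.
under eq_bigr => a _ do rewrite -mulrN (chi3D hF hn).
by rewrite -mulr_sumr (chi3_orth hF hn) oppr_eq0.
Qed.

Lemma W1 (F : finFieldType) n (hF : #|F| = (3 ^ n)%N) (hn : (0 < n)%N)
  (f : F -> F) (f0 : f 0 = 0) (b : F) :
  \sum_(a : F) walsh f a b = #|F|%:R.
Proof.
have ch := ch3_of hF.
rewrite /walsh exchange_big /=.
under eq_bigr => x _ do rewrite (sum_chi_lin hF hn).
rewrite (bigD1 0) //= big1 => [|x /negbTE ->]; last by rewrite mulr0.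
by rewrite eqxx f0 mulr0 chi30 // mul1r addr0.
Qed.

Lemma W_sq (F : finFieldType) n (hF : #|F| = (3 ^ n)%N) (hn : (0 < n)%N)
  (f : F -> F) (a b : F) :
  walsh f a b ^+ 2 = \sum_(x : F) \sum_(y : F) chi3 ((b * f x + b * f y) - a * (x + y)).
Proof.
rewrite expr2 /walsh mulr_suml; apply: eq_bigr => x _; rewrite mulr_sumr.
apply: eq_bigr => y _; rewrite -(chi3D hF hn); congr chi3; ring.
Qed.

Lemma W_cube (F : finFieldType) n (hF : #|F| = (3 ^ n)%N) (hn : (0 < n)%N)
  (f : F -> F) (a b : F) :
  walsh f a b ^+ 3 = \sum_(x : F) \sum_(y : F) \sum_(z : F)
     chi3 ((b * f x + b * f y + b * f z) - a * (x + y + z)).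
Proof.
rewrite exprS (W_sq hF hn) /walsh mulr_suml; apply: eq_bigr => x _; rewrite mulr_sumr.
apply: eq_bigr => y _; rewrite mulr_sumr.
apply: eq_bigr => z _; rewrite -(chi3D hF hn); congr chi3; ring.
Qed.

Lemma W2 (F : finFieldType) n (hF : #|F| = (3 ^ n)%N) (hn : (0 < n)%N)
  (f : F -> F) (fodd : forall x, f (- x) = - f x) (b : F) :
  \sum_(a : F) walsh f a b ^+ 2 = #|F|%:R * #|F|%:R.
Proof.
have ch := ch3_of hF.
under eq_bigr => a _ do rewrite (W_sq hF hn).
rewrite exchange_big /=; under eq_bigr => x _ do rewrite exchange_big /=.
under eq_bigr => x _ do under eq_bigr => y _ do rewrite (sum_chi_lin hF hn).
transitivity (\sum_(x : F) (#|F|%:R : algC)).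
  2: by rewrite sumr_const mulr_natl; congr (_ *+ _); apply: eq_card.
apply: eq_bigr => x _.
rewrite (bigD1 (- x)) //= big1 => [|y /negbTE ne]; last first.
  by rewrite (_ : (x + y == 0) = false) ?mulr0 // addrC addr_eq0.
by rewrite subrr eqxx fodd mulrN subrr chi30 // mul1r addr0.
Qed.

Lemma W3 (F : finFieldType) n (hF : #|F| = (3 ^ n)%N) (hn : (0 < n)%N)
  (f : F -> F) (fodd : forall x, f (- x) = - f x) (b : F) :
  \sum_(a : F) walsh f a b ^+ 3
  = #|F|%:R * \sum_(x : F) \sum_(y : F) chi3 (b * (f x + f y - f (x + y))).
Proof.
have ch := ch3_of hF.
under eq_bigr => a _ do rewrite (W_cube hF hn).
rewrite exchange_big /=; under eq_bigr => x _ do rewrite exchange_big /=.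
under eq_bigr => x _ do under eq_bigr => y _ do rewrite exchange_big /=.
under eq_bigr => x _ do under eq_bigr => y _ do under eq_bigr => z _ do rewrite (sum_chi_lin hF hn).
rewrite mulr_sumr; apply: eq_bigr => x _; rewrite mulr_sumr; apply: eq_bigr => y _.
rewrite (bigD1 (- (x + y))) //= big1 => [|z /negbTE ne]; last first.
  by rewrite (_ : (x + y + z == 0) = false) ?mulr0 // addrC addr_eq0.
rewrite subrr eqxx addr0 mulrC fodd; congr (_ * chi3 _); ring.
Qed.

Lemma sum2_minus1 (F : finType) (h : F -> F -> algC) :
  \sum_(x : F) \sum_(y : F) (h x y - 1) = \sum_(x : F) \sum_(y : F) h x y - (#|F| * #|F|)%:R.
Proof.
under eq_bigr => x _ do rewrite sumrB sumr_const.
rewrite sumrB sumr_const; congr (_ - _).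
rewrite (_ : #|xpredT| = #|F|); last by apply: eq_card.
by rewrite natrM mulr_natr.
Qed.

Lemma sum2_if (F : finType) (P : F -> F -> bool) (c : algC) :
  \sum_(x : F) \sum_(y : F) (if P x y then c else 0)
  = (\sum_(x : F) \sum_(y : F) (P x y : nat))%:R * c.
Proof.
rewrite natr_sum mulr_suml; apply: eq_bigr => x _.
rewrite natr_sum mulr_suml; apply: eq_bigr => y _.
by case: (P x y); rewrite ?mul1r ?mul0r.
Qed.

Unset Implicit Arguments.

Theorem proposition11 (F : finFieldType) (m : nat) (hm : (0 < m)%N)
  (hF : #|F| = ((3 ^ m) ^ 2)%N) :
  \sum_(a : F) \sum_(b : F | b != 0)
     (walsh (fun x : F => x ^+ (3 ^ m + 2)) a b - 1) ^+ 3
  = ((3 ^ m)%:R : algC) ^+ 2 * (((3 ^ m)%:R : algC) ^+ 2 - 1)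
    * (((3 ^ m)%:R : algC) ^+ 3 - 3%:R * ((3 ^ m)%:R : algC) ^+ 2 + 2%:R).
Proof.
have hF' : #|F| = (3 ^ (m * 2))%N by rewrite hF expnM.
have hn : (0 < m * 2)%N by rewrite muln_gt0 hm.
have ch := ch3_of hF'.
set f := fun x : F => x ^+ (3 ^ m + 2).
have fodd : forall x, f (- x) = - f x.
  move=> x; rewrite /f exprNn -signr_odd oddD oddX /= orbT.
  by rewrite /= expr1 mulN1r.
have f0 : f 0 = 0 by rewrite /f expr0n addn2.
set Q := (#|F|%:R : algC).
pose T b := \sum_(x : F) \sum_(y : F) chi3 (b * (f x + f y - f (x + y))).
have Tb : forall b, \sum_(a : F) (walsh f a b - 1) ^+ 3 = Q * T b + (- 3%:R * Q ^+ 2 + 2%:R * Q).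
  move=> b.
  have e : forall w : algC, (w - 1) ^+ 3 = w ^+ 3 - 3%:R * w ^+ 2 + 3%:R * w - 1 by move=> w; ring.
  under eq_bigr => a _ do rewrite e.
  rewrite !big_split /= !sumrN -!mulr_sumr (W3 hF' hn) // (W2 hF' hn) // (W1 hF' hn) //.
  by rewrite sumr_const -/Q -/(T b); ring.
have key : forall s : F, \sum_(b | b != 0) chi3 (b * s) = (if s == 0 then Q else 0) - 1.
  move=> s; have := chi3_orth hF' hn s; rewrite (bigD1 0) //= mul0r chi30 // => <-.
  by rewrite addrC addrK.
have q1 : (1 < 3 ^ m)%N by rewrite -{1}(expn0 3) ltn_exp2l.
have TS : \sum_(b | b != 0) T b = ((3 ^ m) ^ 3 + (3 ^ m) ^ 2 - 3 ^ m)%N%:R * Q - (#|F| * #|F|)%:R.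
  rewrite /T exchange_big /=; under eq_bigr => x _ do rewrite exchange_big /=.
  under eq_bigr => x _ do under eq_bigr => y _ do rewrite key.
  rewrite sum2_minus1 sum2_if /f.
  under eq_bigr => x _ do under eq_bigr => y _ do rewrite G_eq0 //.
  by rewrite countG.
rewrite exchange_big /=.
under eq_bigr => b _ do rewrite Tb.
rewrite big_split /= -mulr_sumr TS sumr_const cardC1.
have hle : (3 ^ m <= (3 ^ m) ^ 3 + (3 ^ m) ^ 2)%N.
  by apply: leq_trans (leq_addl _ _); rewrite expnS expn1 leq_pmulr // expn_gt0.
rewrite /Q hF -subn1 -[_ *+ (_ - 1)]mulr_natr natrB ?expn_gt0 // natrB // ?natrD ?natrM ?natrX.
  by ring.
by rewrite !expn_gt0.
Qed.
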